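(* Let $T=(V,E)$ be a tree with $\mathrm{pthin}(T)=2$, and let $\sigma$ be an ordering of $V$ and $S=\{V^0,V^1\}$ a partition of $V$ that are strongly consistent. Let $v_0\in V^0$ and $v_1\in V^1$ be adjacent. Let $u$ be a vertex that is before the edge $v_0v_1$ and $w$ a vertex that is after the edge $v_0v_1$. Then every path in $T$ from $u$ to $w$ contains $v_0$ or $v_1$.
   Context: For a graph $G=(V,E)$, a linear ordering $<$ of $V$ and a partition of $V$ into classes are called strongly consistent if for every triple $r<s<t$ of vertices with $rt\in E$: if $r$ and $s$ belong to the same class then $st\in E$, and if $s$ and $t$ belong to the same class then $rs\in E$. The proper thinness $\mathrm{pthin}(G)$ is the minimum $k$ such that some ordering and some partition into $k$ classes are strongly consistent. For adjacent $v_0\in V^0$, $v_1\in V^1$ and a vertex $u\notin\{v_0,v_1\}$: $u$ is before the edge $v_0v_1$ if either ($u\in V^0$ and $u<v_0$) or ($u\in V^1$ and $u<v_1$); $u$ is after the edge $v_0v_1$ if either ($u\in V^0$ and $v_0<u$) or ($u\in V^1$ and $v_1<u$). *)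

(* Defs.v *)
From mathcomp Require Import all_boot.
Set Implicit Arguments. Unset Strict Implicit. Unset Printing Implicit Defensive.

Definition simple_graph (T : finType) (e : rel T) : Prop :=
  symmetric e /\ irreflexive e.

Definition has_cycle (T : finType) (e : rel T) : Prop :=
  exists (x : T) (p : seq T),
    [/\ 2 <= size p, uniq (x :: p), path e x p & e (last x p) x].

Definition is_tree (T : finType) (e : rel T) : Prop :=
  [/\ simple_graph e, (forall x y : T, connect e x y) & ~ has_cycle e].

(* A linear ordering of V is given by an injective rank function
   ord : T -> nat (r < s iff ord r < ord s); a partition into classes by a
   class function cls : T -> C. *)
Definition strongly_consistent (T : finType) (e : rel T) (C : eqType)
    (ord : T -> nat) (cls : T -> C) : Prop :=
  forall r s t : T, ord r < ord s -> ord s < ord t -> e r t ->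
    (cls r = cls s -> e s t) /\ (cls s = cls t -> e r s).

Definition pthin_eq (T : finType) (e : rel T) (k : nat) : Prop :=
  (exists (ord : T -> nat) (cls : T -> 'I_k),
      injective ord /\ strongly_consistent e ord cls) /\
  (forall (k' : nat) (ord : T -> nat) (cls : T -> 'I_k'),
      k' < k -> injective ord -> ~ strongly_consistent e ord cls).

(* Partition {V^0, V^1}: cls u = false means u \in V^0, true means u \in V^1. *)
Definition before_edge (T : finType) (ord : T -> nat) (cls : T -> bool)
    (v0 v1 u : T) : Prop :=
  u <> v0 /\ u <> v1 /\
  ((cls u = false /\ ord u < ord v0) \/ (cls u = true /\ ord u < ord v1)).

Definition after_edge (T : finType) (ord : T -> nat) (cls : T -> bool)
    (v0 v1 u : T) : Prop :=
  u <> v0 /\ u <> v1 /\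
  ((cls u = false /\ ord v0 < ord u) \/ (cls u = true /\ ord v1 < ord u)).

(* Main.v *)
Require Import Defs.
From mathcomp Require Import all_boot.
From mathcomp Require Import zify.
Set Implicit Arguments. Unset Strict Implicit.

Lemma ltA m n : m != n -> ~~ (m < n) -> n < m. Proof. lia. Qed.
Lemma ltB m n : n != m -> ~~ (m < n) -> n < m. Proof. lia. Qed.
Lemma ltC m n : m != n -> m <= n -> m < n. Proof. lia. Qed.
Lemma ltD m n : n != m -> m <= n -> m < n. Proof. lia. Qed.
Ltac nlia := solve [ apply: ltA; eassumption | apply: ltB; eassumption
  | apply: ltC; eassumption | apply: ltD; eassumption ].

Lemma cyc3 (T : finType) (e : rel T) a b c :
  e a b -> e b c -> e c a -> a != b -> b != c -> a != c -> has_cycle e.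
Proof.
move=> ab bc ca nab nbc nac; exists a, [:: b; c]; split => //=.
- by rewrite !inE negb_or nab nac nbc.
- by rewrite ab bc.
Qed.

Lemma cyc4 (T : finType) (e : rel T) a b c d :
  e a b -> e b c -> e c d -> e d a ->
  a != b -> a != c -> a != d -> b != c -> b != d -> c != d -> has_cycle e.
Proof.
move=> ab bc cd da nab nac nad nbc nbd ncd; exists a, [:: b; c; d]; split => //=.
- by rewrite !inE !negb_or nab nac nad nbc nbd ncd.
- by rewrite ab bc cd.
Qed.

Lemma core (T : finType) (e : rel T) (ord : T -> nat) (cls : T -> bool) v0 v1 a b :
  simple_graph e -> ~ has_cycle e -> injective ord -> strongly_consistent e ord cls ->
  cls v0 = false -> cls v1 = true -> e v0 v1 -> e a b ->
  a != v0 -> a != v1 -> b != v0 -> b != v1 ->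
  (if cls a then ord a < ord v1 else ord a < ord v0) ->
  ~~ (if cls b then ord b < ord v1 else ord b < ord v0) -> False.
Proof.
move=> [sym irr] nc inj sc c0 c1 e01 eab na0 na1 nb0 nb1 Pa Pb.
have neq : forall x y, x != y -> ord x != ord y.
  by move=> x y nxy; apply/eqP => /inj /eqP; rewrite (negbTE nxy).
have n01 : v0 != v1 by apply/eqP => h; move: e01; rewrite h irr.
have nab : a != b by apply/eqP => h; move: eab; rewrite h irr.
have e10 : e v1 v0 by rewrite sym.
have eba : e b a by rewrite sym.
move: (neq _ _ nb0) (neq _ _ nb1) (neq _ _ na0) (neq _ _ na1) => hb0 hb1 ha0 ha1.
case ca: (cls a) Pa => Pa; case cb: (cls b) Pb => Pb.
-
  have Hb : ord v1 < ord b by nlia.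
  have [h1 h2] := sc a v1 b Pa Hb eab.
  have ev1b := h1 (etrans ca (esym c1)); have eav1 := h2 (etrans c1 (esym cb)).
  apply: nc; apply: (cyc3 eav1 ev1b eba) => //; by rewrite eq_sym.
-
  have Hb : ord v0 < ord b by nlia.
  have eav0 : e a v0.
    case: (ltnP (ord a) (ord v0)) => h.
    + by have [_ h2] := sc a v0 b h Hb eab; apply: h2; rewrite c0 cb.
    + have h' : ord v0 < ord a by nlia.
      have [_ h2] := sc v0 a v1 h' Pa e01.
      by rewrite sym; apply: h2; rewrite ca c1.
  have ebv1 : e b v1.
    case: (ltnP (ord v1) (ord b)) => h.
    + by have [h1 _] := sc a v1 b Pa h eab; rewrite sym; apply: h1; rewrite ca c1.
    + have h' : ord b < ord v1 by nlia.
      have [h1 _] := sc v0 b v1 Hb h' e01.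
      by apply: h1; rewrite c0 cb.
  have ev0a : e v0 a by rewrite sym.
  apply: nc; apply: (cyc4 eab ebv1 e10 ev0a) => //; by rewrite eq_sym.
-
  have Hb : ord v1 < ord b by nlia.
  have ev0b : e v0 b.
    case: (ltnP (ord v0) (ord b)) => h.
    + by have [h1 _] := sc a v0 b Pa h eab; apply: h1; rewrite ca c0.
    + have h' : ord b < ord v0 by nlia.
      have [h1 _] := sc v1 b v0 Hb h' e10.
      by rewrite sym; apply: h1; rewrite c1 cb.
  have eav1 : e a v1.
    case: (ltnP (ord a) (ord v1)) => h.
    + by have [_ h2] := sc a v1 b h Hb eab; apply: h2; rewrite c1 cb.
    + have h' : ord v1 < ord a by nlia.
      have [_ h2] := sc v1 a v0 h' Pa e10.
      by rewrite sym; apply: h2; rewrite ca c0.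
  have ebv0 : e b v0 by rewrite sym.
  have ev1a : e v1 a by rewrite sym.
  apply: nc; apply: (cyc4 eab ebv0 e01 ev1a) => //; by rewrite eq_sym.
-
  have Hb : ord v0 < ord b by nlia.
  have [h1 h2] := sc a v0 b Pa Hb eab.
  have ev0b := h1 (etrans ca (esym c0)); have eav0 := h2 (etrans c0 (esym cb)).
  apply: nc; apply: (cyc3 eav0 ev0b eba) => //; by rewrite eq_sym.
Qed.

Lemma trans_edge (T : finType) (e : rel T) (P : pred T) u p :
  path e u p -> P u -> ~~ P (last u p) ->
  exists a b, [/\ e a b, P a, ~~ P b, a \in u :: p & b \in u :: p].
Proof.
elim: p u => [|x p IH] u /=; first by move=> _ ->.
move=> /andP [eux pp] Pu Pl.
case Px: (P x).
- have [a [b [h1 h2 h3 h4 h5]]] := IH x pp Px Pl.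
  by exists a, b; split => //; rewrite in_cons ?h4 ?h5 orbT.
- by exists u, x; split => //; rewrite ?Px ?in_cons ?eqxx ?orbT.
Qed.

Theorem propositionA4 (T : finType) (e : rel T) (ord : T -> nat)
    (cls : T -> bool) (v0 v1 u w : T) :
  is_tree e -> pthin_eq e 2 ->
  injective ord -> strongly_consistent e ord cls ->
  cls v0 = false -> cls v1 = true -> e v0 v1 ->
  before_edge ord cls v0 v1 u -> after_edge ord cls v0 v1 w ->
  forall p : seq T, path e u p -> last u p = w -> uniq (u :: p) ->
    (v0 \in u :: p) || (v1 \in u :: p).
Proof.
move=> [sg _ nc] _ inj sc c0 c1 e01 [_ [_ bu]] [w0 [w1 aw]] p pp lw _.
apply/negPn/negP; rewrite negb_or => /andP [n0 n1].
pose P := fun x => if cls x then ord x < ord v1 else ord x < ord v0.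
have Pu : P u by rewrite /P; case: bu => [[-> h]|[-> h]].
have Pw : ~~ P (last u p).
  rewrite lw /P; case: aw => [[-> h]|[-> h]]; rewrite -leqNgt ltnW //.
have [a [b [eab Pa Pb ain bin]]] := trans_edge pp Pu Pw.
have ne : forall x, x \in u :: p -> (x != v0) && (x != v1).
  by move=> x xin; apply/andP; split; apply/eqP => h; move: xin; rewrite h ?(negbTE n0) ?(negbTE n1).
move: (ne a ain) (ne b bin) => /andP [na0 na1] /andP [nb0 nb1].
exact: (core sg nc inj sc c0 c1 e01 eab na0 na1 nb0 nb1 Pa Pb).
Qed.
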